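(* Let $\mathcal P$ be a set of pre-tangles in a graph $G$, let $N$ be a nested set of $\mathcal P$-relevant proper separations of $G$ which efficiently distinguishes $\mathcal P$, and let $(\vec s_i)_{i\in\mathbb N}$ be a strictly increasing sequence of orientations of separations in $N$. If the orders $|s_i|$ are strictly increasing, then there is a strictly increasing sequence $(\vec s_i')_{i\in\mathbb N}$ of orientations of separations in $N$ which contains $(\vec s_i)_i$ as a subsequence and is strongly $\mathcal P$-relevant.
   Context: Notation: $s$ denotes a separation (an unordered pair $\{A,B\}$ of subsets of $V(G)$ with $A\cup B=V(G)$ and no edge between $A\setminus B$ and $B\setminus A$; order $|s|=|A\cap B|$; proper if $A\ne V(G)\ne B$), $\vec s,\overleftarrow{s}$ its two orientations; oriented separations are ordered by $(A,B)\le(C,D)$ iff $A\subseteq C$ and $B\supseteq D$. Nested: some orientations comparable. A set $O$ of oriented separations is consistent if there are no $(A,B),(C,D)\in O$ with $\{A,B\}\ne\{C,D\}$ and $(B,A)\le(C,D)$. A pre-tangle is a consistent set $P$ which, for some $k\in\mathbb N\cup\{\aleph_0\}$, contains exactly one orientation of every separation of order $<k$ and nothing else. A separation distinguishes two pre-tangles if both contain an orientation of it but different ones; efficiently if of minimum order among such. $N$ efficiently distinguishes $\mathcal P$ if any two pre-tangles in $\mathcal P$ distinguished by some separation are efficiently distinguished by an element of $N$. A separation is $\mathcal P$-relevant if it efficiently distinguishes some two pre-tangles in $\mathcal P$. A pair $\vec s<\vec t$ is strongly $\mathcal P$-relevant if there are $O,P,Q\in\mathcal P$ such that $s$ efficiently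 distinguishes $O$ and $P$ with $\vec s\in P$, and $t$ efficiently distinguishes $P$ and $Q$ with $\overleftarrow{t}\in P$; a strictly increasing sequence is strongly $\mathcal P$-relevant if all consecutive pairs are. *)

(* Defs.v *)
(* graphs on an arbitrary (possibly infinite) vertex type,
   sets represented as predicates V -> Prop. *)
From Stdlib Require Import List PeanoNat.
Import ListNotations.

Section Separations.
Variable V : Type.
Variable E : V -> V -> Prop.

(* an oriented separation (A,B); the separation {A,B} is represented by
   either of its orientations *)
Definition osep := ((V -> Prop) * (V -> Prop))%type.

Definition flip (s : osep) : osep := (snd s, fst s).

Definition is_sep (s : osep) : Prop :=
  (forall v, fst s v \/ snd s v) /\
  (forall x y, fst s x -> ~ snd s x -> snd s y -> ~ fst s y ->
     ~ E x y /\ ~ E y x).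

Definition proper_sep (s : osep) : Prop :=
  is_sep s /\ (exists v, ~ fst s v) /\ (exists v, ~ snd s v).

Definition same_sep (s t : osep) : Prop := s = t \/ s = flip t.

Definition has_order (s : osep) (n : nat) : Prop :=
  exists l : list V, NoDup l /\ length l = n /\
    (forall x, In x l <-> (fst s x /\ snd s x)).

(* cardinal comparison |s| <= |t| : an injection from A cap B into C cap D *)
Definition order_le (s t : osep) : Prop :=
  exists f : V -> V,
    (forall x, fst s x -> snd s x -> fst t (f x) /\ snd t (f x)) /\
    (forall x y, fst s x -> snd s x -> fst s y -> snd s y -> f x = f y -> x = y).

Definition order_lt (s t : osep) : Prop := order_le s t /\ ~ order_le t s.

(* |s| < k, where k = Some n means k = n in N and k = None means k = aleph_0 *)
Definition order_below (s : osep) (k : option nat) : Prop :=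
  match k with
  | Some n => exists m, has_order s m /\ m < n
  | None => exists m, has_order s m
  end.

Definition ole (s t : osep) : Prop :=
  (forall v, fst s v -> fst t v) /\ (forall v, snd t v -> snd s v).

Definition olt (s t : osep) : Prop := ole s t /\ s <> t.

Definition consistent (O : osep -> Prop) : Prop :=
  forall s t, O s -> O t -> ~ same_sep s t -> ~ ole (flip s) t.

Definition pre_tangle (P : osep -> Prop) : Prop :=
  consistent P /\
  exists k : option nat,
    (forall s, P s -> is_sep s /\ order_below s k) /\
    (forall s, is_sep s -> order_below s k ->
       (P s \/ P (flip s)) /\ (s <> flip s -> ~ (P s /\ P (flip s)))).

Definition distinguishes (s : osep) (P1 P2 : osep -> Prop) : Prop :=
  s <> flip s /\ ((P1 s /\ P2 (flip s)) \/ (P1 (flip s) /\ P2 s)).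

Definition eff_distinguishes (s : osep) (P1 P2 : osep -> Prop) : Prop :=
  is_sep s /\ distinguishes s P1 P2 /\
  forall t, is_sep t -> distinguishes t P1 P2 -> order_le s t.

(* a set of separations N, given by a set of representing orientations:
   the separation of s lies in N *)
Definition sep_in (N : osep -> Prop) (s : osep) : Prop := N s \/ N (flip s).

Definition nested (N : osep -> Prop) : Prop :=
  forall s t, N s -> N t ->
    ole s t \/ ole t s \/ ole s (flip t) \/ ole (flip t) s.

Definition eff_distinguishes_set (N : osep -> Prop)
    (PP : (osep -> Prop) -> Prop) : Prop :=
  forall P1 P2, PP P1 -> PP P2 ->
    (exists t, is_sep t /\ distinguishes t P1 P2) ->
    exists s, sep_in N s /\ eff_distinguishes s P1 P2.

Definition relevant (PP : (osep -> Prop) -> Prop) (s : osep) : Prop :=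
  exists P1 P2, PP P1 /\ PP P2 /\ eff_distinguishes s P1 P2.

Definition strongly_relevant_pair (PP : (osep -> Prop) -> Prop) (s t : osep) : Prop :=
  olt s t /\
  exists O P Q, PP O /\ PP P /\ PP Q /\
    eff_distinguishes s O P /\ P s /\
    eff_distinguishes t P Q /\ P (flip t).

Definition strictly_increasing (u : nat -> osep) : Prop :=
  forall i, olt (u i) (u (S i)).

Definition strongly_relevant_seq (PP : (osep -> Prop) -> Prop) (u : nat -> osep) : Prop :=
  strictly_increasing u /\ forall i, strongly_relevant_pair PP (u i) (u (S i)).

End Separations.

Arguments flip {V}.
Arguments same_sep {V}.
Arguments has_order {V}.
Arguments order_le {V}.
Arguments order_lt {V}.
Arguments order_below {V}.
Arguments ole {V}.
Arguments olt {V}.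
Arguments consistent {V}.
Arguments distinguishes {V}.
Arguments sep_in {V}.
Arguments nested {V}.
Arguments strictly_increasing {V}.

(* Main.v *)
Require Import Defs.
From Stdlib Require Import List PeanoNat Lia Classical ClassicalEpsilon.
Import ListNotations.

Lemma flip_flip {V : Type} (s : osep V) : flip (flip s) = s.
Proof. destruct s; reflexivity. Qed.

Lemma is_sep_flip V E (s : osep V) : is_sep V E s -> is_sep V E (flip s).
Proof.
  unfold is_sep; destruct s as [A B]; simpl. intros [H1 H2]; split.
  - intro v; destruct (H1 v); auto.
  - intros x y Hx Hnx Hy Hny. destruct (H2 y x Hy Hny Hx Hnx); split; auto.
Qed.

Lemma dist_sym {V : Type} (s : osep V) A B : distinguishes s A B -> distinguishes s B A.
Proof. unfold distinguishes. intros [Hne [[? ?]|[? ?]]]; split; auto. Qed.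

Lemma dist_flip {V : Type} (s : osep V) A B : distinguishes s A B -> distinguishes (flip s) A B.
Proof.
  unfold distinguishes. rewrite flip_flip. intros [Hne [[? ?]|[? ?]]]; split; auto;
  intro H; apply Hne; symmetry; exact H.
Qed.

Lemma order_le_refl {V : Type} (s : osep V) : order_le s s.
Proof. exists (fun x => x). split; auto. Qed.

Lemma order_le_trans {V : Type} (s t u : osep V) : order_le s t -> order_le t u -> order_le s u.
Proof.
  intros [f [F1 F2]] [g [G1 G2]]. exists (fun x => g (f x)). split.
  - intros x Hx1 Hx2. destruct (F1 x Hx1 Hx2). apply G1; auto.
  - intros x y Hx1 Hx2 Hy1 Hy2 Heq. destruct (F1 x Hx1 Hx2). destruct (F1 y Hy1 Hy2).
    apply F2; auto.
Qed.

Lemma order_le_flip_l {V : Type} (s t : osep V) : order_le s t -> order_le (flip s) t.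
Proof.
  destruct s as [A B]; unfold order_le; simpl. intros [f [F1 F2]]; exists f; split.
  - intros x H1 H2; apply F1; auto.
  - intros x y H1 H2 H3 H4; apply F2; auto.
Qed.

Lemma order_le_flip_r {V : Type} (s t : osep V) : order_le s t -> order_le s (flip t).
Proof.
  destruct t as [A B]; unfold order_le; simpl. intros [f [F1 F2]]; exists f; split.
  - intros x H1 H2; destruct (F1 x H1 H2); auto.
  - exact F2.
Qed.

Lemma order_le_unflip_l {V : Type} (s t : osep V) : order_le (flip s) t -> order_le s t.
Proof. intro H. rewrite <- (flip_flip s). apply order_le_flip_l; auto. Qed.

Lemma order_le_unflip_r {V : Type} (s t : osep V) : order_le s (flip t) -> order_le s t.
Proof. intro H. rewrite <- (flip_flip t). apply order_le_flip_r; auto. Qed.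

Lemma same_sep_le {V : Type} (x y : osep V) : same_sep x y -> order_le x y /\ order_le y x.
Proof.
  intros [H|H]; subst; split.
  - apply order_le_refl.
  - apply order_le_refl.
  - apply order_le_flip_l, order_le_refl.
  - apply order_le_flip_r, order_le_refl.
Qed.

Lemma eff_flip V E (s : osep V) A B :
  eff_distinguishes V E s A B -> eff_distinguishes V E (flip s) A B.
Proof.
  intros [H1 [H2 H3]]. split; [apply is_sep_flip; auto|]. split; [apply dist_flip; auto|].
  intros t Ht Hd. apply order_le_flip_l; auto.
Qed.

Lemma eff_sym V E (s : osep V) A B :
  eff_distinguishes V E s A B -> eff_distinguishes V E s B A.
Proof.
  intros [H1 [H2 H3]]. split; auto. split; [apply dist_sym; auto|].
  intros t Ht Hd. apply H3; auto. apply dist_sym; auto.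
Qed.

Lemma ole_trans {V : Type} (x y z : osep V) : ole x y -> ole y z -> ole x z.
Proof. unfold ole. intros [A1 A2] [B1 B2]; split; auto. Qed.

Lemma ole_flip {V : Type} (x y : osep V) : ole x y -> ole (flip y) (flip x).
Proof. destruct x, y; unfold ole; simpl. intros [A1 A2]; split; auto. Qed.

Lemma has_order_flip {V : Type} (s : osep V) m : has_order s m -> has_order (flip s) m.
Proof.
  destruct s as [A B]; unfold has_order; simpl. intros [l [H1 [H2 H3]]].
  exists l; split; auto; split; auto. intro x; rewrite H3; tauto.
Qed.

Lemma pigeon {V : Type} (s t : osep V) m n :
  has_order s m -> has_order t n -> order_le s t -> m <= n.
Proof.
  intros [l1 [N1 [L1 M1]]] [l2 [N2 [L2 M2]]] [f [F1 F2]]. subst.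
  rewrite <- (length_map f l1). apply NoDup_incl_length.
  - apply NoDup_map_NoDup_ForallPairs; auto.
    intros a b Ha Hb Heq. apply M1 in Ha, Hb. apply F2; tauto.
  - intros y Hy. apply in_map_iff in Hy. destruct Hy as [x [Hx Hin]]. subst.
    apply M2. apply M1 in Hin. apply F1; tauto.
Qed.

Lemma inj_exists {V : Type} (l1 : list V) : forall l2 : list V,
  NoDup l2 -> length l1 <= length l2 ->
  exists f : V -> V, (forall x, In x l1 -> In (f x) l2) /\
    (forall x y, In x l1 -> In y l1 -> f x = f y -> x = y).
Proof.
  induction l1 as [|a l1 IH]; intros l2 N2 L.
  - exists (fun x => x). split; intros; simpl in *; tauto.
  - destruct l2 as [|b l2]; simpl in L; [lia|].
    inversion N2; subst.
    destruct (IH l2 H2 ltac:(lia)) as [g [G1 G2]].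
    exists (fun x => if excluded_middle_informative (x = a) then b else g x). split.
    + intros x Hx. destruct (excluded_middle_informative (x = a)); simpl; auto.
      right. apply G1. destruct Hx; [congruence|auto].
    + intros x y Hx Hy.
      destruct (excluded_middle_informative (x = a)); destruct (excluded_middle_informative (y = a)).
      * congruence.
      * intro Heq. exfalso. apply H1. rewrite Heq. apply G1. destruct Hy; [congruence|auto].
      * intro Heq. exfalso. apply H1. rewrite <- Heq. apply G1. destruct Hx; [congruence|auto].
      * apply G2; [destruct Hx; [congruence|auto]|destruct Hy; [congruence|auto]].
Qed.

Lemma build_le {V : Type} (s t : osep V) m n :
  has_order s m -> has_order t n -> m <= n -> order_le s t.
Proof.
  intros [l1 [N1 [L1 M1]]] [l2 [N2 [L2 M2]]] Hle. subst.
  destruct (inj_exists l1 l2 N2 Hle) as [f [F1 F2]].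
  exists f. split.
  - intros x H1 H2. apply M2. apply F1. apply M1; auto.
  - intros x y H1 H2 H3 H4. apply F2; apply M1; auto.
Qed.

Lemma tot {V : Type} (s t : osep V) :
  (exists m, has_order s m) -> (exists n, has_order t n) -> ~ order_le s t -> order_le t s.
Proof.
  intros [m Hm] [n Hn] Hnle. destruct (Nat.le_gt_cases m n).
  - exfalso; apply Hnle; eapply build_le; eauto.
  - eapply build_le; eauto. lia.
Qed.

Lemma pt_cons V E P (a b : osep V) :
  pre_tangle V E P -> P a -> P b -> ~ same_sep a b -> ~ ole (flip a) b.
Proof. intros [Hc _]. apply Hc. Qed.

Lemma pt_uniq V E P (r : osep V) : pre_tangle V E P -> P r -> P (flip r) -> r = flip r.
Proof.
  intros [_ [k [H1 H2]]] Hr Hfr. destruct (H1 r Hr) as [Hs Hob].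
  destruct (H2 r Hs Hob) as [_ Hu]. destruct (classic (r = flip r)); auto.
  exfalso; apply (Hu H); auto.
Qed.

Lemma pt_fin V E P (r : osep V) : pre_tangle V E P -> P r -> exists m, has_order r m.
Proof.
  intros [_ [k [H1 H2]]] Hr. destruct (H1 r Hr) as [_ Hob].
  destruct k; simpl in Hob; [destruct Hob as [m [Hm _]]|]; eauto.
Qed.

Lemma pt_orient V E P (x r : osep V) : pre_tangle V E P -> P x -> is_sep V E r ->
  order_le r x -> (exists m, has_order r m) -> P r \/ P (flip r).
Proof.
  intros [_ [k [H1 H2]]] Hx Hr Hle [m Hm]. destruct (H1 x Hx) as [_ Hob].
  assert (order_below r k).
  { destruct k as [n|]; simpl in *.
    - destruct Hob as [m1 [Hm1 Hlt]]. exists m; split; auto.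
      pose proof (pigeon _ _ _ _ Hm Hm1 Hle). lia.
    - eauto. }
  apply (H2 r Hr H).
Qed.

Lemma dist_fin V E P Q (r : osep V) : pre_tangle V E P -> distinguishes r P Q ->
  exists m, has_order r m.
Proof.
  intros HP [_ [[Hp _]|[Hp _]]].
  - eapply pt_fin; eauto.
  - destruct (pt_fin _ _ _ _ HP Hp) as [m Hm]. exists m.
    rewrite <- (flip_flip r). apply has_order_flip; auto.
Qed.

Lemma rel_orient V E PP (r : osep V) : relevant V E PP r ->
  exists A B, PP A /\ PP B /\ eff_distinguishes V E r A B /\ A (flip r) /\ B r.
Proof.
  intros [P1 [P2 [H1 [H2 He]]]]. pose proof He as He'.
  destruct He' as [_ [[_ [[a b]|[a b]]] _]].
  - exists P2, P1. split; [auto|split; [auto|split; [apply eff_sym; auto|auto]]].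
  - exists P1, P2. split; [auto|split; [auto|split; [auto|auto]]].
Qed.

Lemma eff_orient V E (r : osep V) A B : eff_distinguishes V E r A B ->
  exists rho, (rho = r \/ rho = flip r) /\ eff_distinguishes V E rho A B /\ A (flip rho) /\ B rho.
Proof.
  intros He. pose proof He as He'. destruct He' as [_ [[_ [[a b]|[a b]]] _]].
  - exists (flip r). rewrite flip_flip. split; [auto|split; [apply eff_flip; auto|auto]].
  - exists r. split; [auto|split; [auto|auto]].
Qed.

Lemma sep_in_flip {V : Type} (N : osep V -> Prop) r : sep_in N r -> sep_in N (flip r).
Proof. unfold sep_in. rewrite flip_flip. tauto. Qed.

Lemma nested_sep {V : Type} (N : osep V -> Prop) a b : nested N -> sep_in N a -> sep_in N b ->
  ole a b \/ ole b a \/ ole a (flip b) \/ ole (flip b) a.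
Proof.
  intros HN Ha Hb.
  assert (Hinv : forall x y : osep V, (ole x y \/ ole y x \/ ole x (flip y) \/ ole (flip y) x) ->
            (ole (flip x) y \/ ole y (flip x) \/ ole (flip x) (flip y) \/ ole (flip y) (flip x))).
  { intros x y [H|[H|[H|H]]].
    - right; right; right. apply ole_flip; auto.
    - right; right; left. apply ole_flip; auto.
    - right; left. pose proof (ole_flip _ _ H) as H'. rewrite flip_flip in H'. auto.
    - left. pose proof (ole_flip _ _ H) as H'. rewrite flip_flip in H'. auto. }
  assert (Hsym : forall x y : osep V, (ole x y \/ ole y x \/ ole x (flip y) \/ ole (flip y) x) ->
            (ole y x \/ ole x y \/ ole y (flip x) \/ ole (flip x) y)).
  { intros x y [H|[H|[H|H]]].
    - right; left; auto.
    - left; auto.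
    - right; right; left. pose proof (ole_flip _ _ H) as H'. rewrite flip_flip in H'. auto.
    - right; right; right. pose proof (ole_flip _ _ H) as H'. rewrite flip_flip in H'. auto. }
  destruct Ha as [Ha|Ha]; destruct Hb as [Hb|Hb].
  - apply HN; auto.
  - rewrite <- (flip_flip b). apply Hsym, Hinv, Hsym. apply HN; auto.
  - rewrite <- (flip_flip a). apply Hinv. apply HN; auto.
  - rewrite <- (flip_flip a), <- (flip_flip b). apply Hinv, Hsym, Hinv, Hsym. apply HN; auto.
Qed.

Definition gapP V E PP (N : osep V -> Prop) (s t : osep V) (o : option (osep V)) : Prop :=
  match o with
  | None => strongly_relevant_pair V E PP s t
  | Some m => sep_in N m /\ strongly_relevant_pair V E PP s m /\ strongly_relevant_pair V E PP m t
  end.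

Lemma rel_in V E PP (N : osep V -> Prop) (HNrel : forall s, N s -> relevant V E PP s) r :
  sep_in N r -> relevant V E PP r.
Proof.
  intros [H|H]; auto. destruct (HNrel _ H) as [P1 [P2 [H1 [H2 He]]]].
  exists P1, P2. split; auto. split; auto. rewrite <- (flip_flip r). apply eff_flip; auto.
Qed.

Lemma gap V E PP (HPP : forall P, PP P -> pre_tangle V E P)
  (N : osep V -> Prop)
  (HNrel : forall s, N s -> relevant V E PP s)
  (HNnested : nested N)
  (HNeff : eff_distinguishes_set V E N PP)
  (s t : osep V) (Hsin : sep_in N s) (Htin : sep_in N t)
  (Hst : olt s t) (Hord : order_lt s t) :
  exists o, gapP V E PP N s t o.
Proof.
  destruct Hord as [Hst_le Hts_nle].
  destruct (rel_orient _ _ _ _ (rel_in _ _ _ _ HNrel _ Hsin)) as [Ps [Qs [HPs [HQs [Hes [HPs_s HQs_s]]]]]].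
  destruct (rel_orient _ _ _ _ (rel_in _ _ _ _ HNrel _ Htin)) as [X [Qt [HX [HQt [Het [HXt HQtt]]]]]].
  pose proof (HPP _ HPs) as TPs. pose proof (HPP _ HQs) as TQs.
  pose proof (HPP _ HX) as TX. pose proof (HPP _ HQt) as TQt.
  pose proof Hes as [Hsep_s [[Hne_s _] Hes_min]].
  pose proof Het as [Hsep_t [[Hne_t _] Het_min]].
  pose proof (pt_fin _ _ _ _ TQs HQs_s) as Hfin_s.
  assert (HXs : X s).
  { destruct (pt_orient _ _ _ _ _ TX HXt Hsep_s (order_le_flip_r _ _ Hst_le) Hfin_s) as [H|H]; [exact H|].
    exfalso. assert (HQts : Qt s).
    { destruct (pt_orient _ _ _ _ _ TQt HQtt Hsep_s Hst_le Hfin_s) as [H'|H']; [exact H'|].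
      exfalso. apply (pt_cons _ _ _ _ _ TQt H' HQtt).
      - intro Hss. apply Hts_nle. apply order_le_unflip_r. apply (same_sep_le _ _ Hss).
      - rewrite flip_flip. exact (proj1 Hst). }
    apply Hts_nle. apply Het_min; [exact Hsep_s|]. split; [exact Hne_s| right; split; assumption]. }
  destruct (classic (eff_distinguishes V E s Ps X)) as [HA|HB].
  - exists None. simpl. split; [exact Hst|]. exists Ps, X, Qt.
    split; [auto|split; [auto|split; [auto|split; [auto|split; [auto|split; auto]]]]].
  - assert (exists t', is_sep V E t' /\ distinguishes t' Ps X /\ ~ order_le s t') as [t' [Hsep' [Hd' Hnle']]].
    { apply NNPP; intro Hc; apply HB. split; [exact Hsep_s|]. split.
      - split; [exact Hne_s| right; split; assumption].
      - intros r Hr Hd. apply NNPP; intro Hn. apply Hc. exists r; auto. }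
    pose proof (dist_fin _ _ _ _ _ TPs Hd') as Hfin'.
    pose proof (tot _ _ Hfin_s Hfin' Hnle') as Hle_t's.
    assert (Hd2 : distinguishes t' Qs X).
    { pose proof Hd' as [Hne' _].
      destruct (pt_orient _ _ _ _ _ TQs HQs_s Hsep' Hle_t's Hfin') as [Hq|Hq];
      destruct Hd' as [_ [[Hp Hx]|[Hp Hx]]].
      - split; auto.
      - exfalso. apply Hnle'. apply Hes_min; auto. split; auto.
      - exfalso. apply Hnle'. apply Hes_min; auto. split; auto.
      - split; auto. }
    destruct (HNeff Qs X HQs HX (ex_intro _ t' (conj Hsep' Hd2))) as [r [Hrin Her]].
    destruct (eff_orient _ _ _ _ _ Her) as [rho [Hrr [Herho [HQsr HXr]]]].
    assert (Hrhoin : sep_in N rho).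
    { destruct Hrr; subst; auto. apply sep_in_flip; auto. }
    clear r Hrin Her Hrr.
    pose proof Herho as [Hsep_r [[Hne_r _] Her_min]].
    assert (Hnle_sr : ~ order_le s rho).
    { intro H. apply Hnle'. apply order_le_trans with rho; auto. }
    pose proof (pt_fin _ _ _ _ TX HXr) as Hfin_r.
    pose proof (tot _ _ Hfin_s Hfin_r Hnle_sr) as Hle_rs.
    assert (HPsr : Ps (flip rho)).
    { destruct (pt_orient _ _ _ _ _ TPs HPs_s Hsep_r (order_le_flip_r _ _ Hle_rs) Hfin_r) as [H|H]; auto.
      exfalso. apply Hnle_sr. apply Hes_min; auto. split; auto. }
    assert (Hn3 : ~ ole s (flip rho)).
    { intro H. apply (pt_cons _ _ _ _ _ TPs HPs_s HPsr).
      - intro Hss. apply Hnle_sr. apply order_le_unflip_l, order_le_unflip_r, (same_sep_le _ _ Hss).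
      - rewrite flip_flip. exact H. }
    assert (Hsr : olt s rho).
    { destruct (nested_sep N s rho HNnested Hsin Hrhoin) as [H|[H|[H|H]]].
      - split; auto. intro Heq; subst; apply Hnle_sr; apply order_le_refl.
      - exfalso. apply (pt_cons _ _ _ _ _ TQs HQsr HQs_s).
        + intro Hss. apply Hnle_sr. apply order_le_unflip_r, (same_sep_le _ _ Hss).
        + rewrite flip_flip. exact H.
      - exfalso; auto.
      - exfalso. apply (pt_cons _ _ _ _ _ TX HXr HXs).
        + intro Hss. apply Hnle_sr. apply (same_sep_le _ _ Hss).
        + exact H. }
    assert (Hrt : olt rho t).
    { destruct (nested_sep N rho t HNnested Hrhoin Htin) as [H|[H|[H|H]]].
      - split; auto. intro Heq. rewrite Heq in HXr. apply Hne_t. exact (pt_uniq _ _ _ _ TX HXr HXt).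
      - exfalso. apply (pt_cons _ _ _ _ _ TX HXt HXr).
        + intro Hss. apply Hts_nle. apply order_le_trans with rho; auto.
          apply order_le_unflip_l, (same_sep_le _ _ Hss).
        + rewrite flip_flip. exact H.
      - exfalso. apply Hn3. apply ole_trans with t; [exact (proj1 Hst)|].
        pose proof (ole_flip _ _ H) as H'. rewrite flip_flip in H'. exact H'.
      - exfalso.
        destruct (pt_orient _ _ _ _ _ TQt HQtt Hsep_r (order_le_trans _ _ _ Hle_rs Hst_le) Hfin_r) as [Hq|Hq].
        + apply (pt_cons _ _ _ _ _ TQt Hq HQtt).
          * intro Hss. apply Hts_nle. apply order_le_trans with rho; auto. apply (same_sep_le _ _ Hss).
          * pose proof (ole_flip _ _ H) as H'. rewrite flip_flip in H'. exact H'.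
        + apply Hts_nle. apply order_le_trans with rho; auto. apply Het_min; auto. split; auto. }
    exists (Some rho). simpl. split; [exact Hrhoin|]. split.
    + split; [exact Hsr|]. exists Ps, Qs, X.
      split; [auto|split; [auto|split; [auto|split; [auto|split; [auto|split; auto]]]]].
    + split; [exact Hrt|]. exists Qs, X, Qt.
      split; [auto|split; [auto|split; [auto|split; [auto|split; [auto|split; auto]]]]].
Qed.

Definition step {A : Type} (mid : nat -> option A) (p : nat * bool) : nat * bool :=
  let (i, b) := p in
  if b then (S i, false) else
  match mid i with None => (S i, false) | Some _ => (i, true) end.

Fixpoint st {A : Type} (mid : nat -> option A) (n : nat) : nat * bool :=
  match n with 0 => (0, false) | S n' => step mid (st mid n') end.

Definition valp {A : Type} (s : nat -> A) (mid : nat -> option A) (p : nat * bool) : A :=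
  let (i, b) := p in
  if b then match mid i with Some m => m | None => s i end else s i.

Fixpoint phi {A : Type} (mid : nat -> option A) (i : nat) : nat :=
  match i with 0 => 0 | S i' => phi mid i' + match mid i' with None => 1 | Some _ => 2 end end.

Lemma st_phi {A : Type} (mid : nat -> option A) i : st mid (phi mid i) = (i, false).
Proof.
  induction i as [|i IH]; simpl; auto.
  destruct (mid i) eqn:Hm.
  - rewrite Nat.add_comm. simpl. rewrite IH. simpl. rewrite Hm. reflexivity.
  - rewrite Nat.add_comm. simpl. rewrite IH. simpl. rewrite Hm. reflexivity.
Qed.

Lemma st_true {A : Type} (mid : nat -> option A) n i :
  st mid n = (i, true) -> exists m, mid i = Some m.
Proof.
  destruct n as [|n]; simpl; [discriminate|].
  destruct (st mid n) as [j b]; simpl. destruct b; [discriminate|].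
  destruct (mid j) eqn:Hm; [|discriminate]. intro H; inversion H; subst; eauto.
Qed.

Theorem mainTheorem15 (V : Type) (E : V -> V -> Prop)
  (E_sym : forall x y, E x y -> E y x) (E_irr : forall x, ~ E x x)
  (PP : (osep V -> Prop) -> Prop)
  (HPP : forall P, PP P -> pre_tangle V E P)
  (N : osep V -> Prop)
  (HNproper : forall s, N s -> proper_sep V E s)
  (HNrel : forall s, N s -> relevant V E PP s)
  (HNnested : nested N)
  (HNeff : eff_distinguishes_set V E N PP)
  (s : nat -> osep V)
  (Hs_in : forall i, sep_in N (s i))
  (Hs_inc : strictly_increasing s)
  (Hs_ord : forall i, order_lt (s i) (s (S i))) :
  exists s' : nat -> osep V,
    (forall i, sep_in N (s' i)) /\
    strictly_increasing s' /\
    (exists phi : nat -> nat, (forall i, phi i < phi (S i)) /\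
       forall i, s' (phi i) = s i) /\
    strongly_relevant_seq V E PP s'.
Proof.
  assert (G : forall i, exists o, gapP V E PP N (s i) (s (S i)) o).
  { intro i. apply gap; auto. }
  set (mid := fun i => proj1_sig (constructive_indefinite_description _ (G i))).
  assert (Hmid : forall i, gapP V E PP N (s i) (s (S i)) (mid i)).
  { intro i. unfold mid. apply proj2_sig. }
  clearbody mid.
  assert (Hin : forall n, sep_in N (valp s mid (st mid n))).
  { intro n. destruct (st mid n) as [i b] eqn:Hst. destruct b; simpl; auto.
    destruct (st_true _ _ _ Hst) as [m Hm]. rewrite Hm. specialize (Hmid i). rewrite Hm in Hmid.
    apply Hmid. }
  assert (Hsrp : forall n, strongly_relevant_pair V E PP (valp s mid (st mid n)) (valp s mid (st mid (S n)))).
  { intro n. simpl. destruct (st mid n) as [i b] eqn:Hst. destruct b; simpl.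
    - destruct (st_true _ _ _ Hst) as [m Hm]. rewrite Hm. specialize (Hmid i). rewrite Hm in Hmid.
      apply Hmid.
    - specialize (Hmid i). destruct (mid i) as [m|] eqn:Hm; simpl.
      + rewrite Hm. apply Hmid.
      + apply Hmid. }
  exists (fun n => valp s mid (st mid n)). split; [exact Hin|].
  assert (Hinc : strictly_increasing (fun n => valp s mid (st mid n))).
  { intro n. apply (Hsrp n). }
  split; [exact Hinc|]. split.
  - exists (phi mid). split.
    + intro i. simpl. destruct (mid i); lia.
    + intro i. rewrite st_phi. reflexivity.
  - split; [exact Hinc|]. exact Hsrp.
Qed.
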